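(* Let $m\ge2$, $n$ be integers and $k$ an integer with $1\le k\le n^2-3n+2$, written $k=(n-1)q+r$ with $q\ge0$, $1\le r\le n-1$. Let $M_1=(\mu_{ij})$ be the $n\times n$ $0/1$ matrix with $\mu_{1,n-1}=\mu_{1,n}=1$, $\mu_{i,i-1}=1$ for $2\le i\le n$, all other entries $0$. Let $\mathbb{A}_0$ be the order $m$, dimension $n$ tensor with $(\mathbb{A}_0)_{ij\ldots j}=\mu_{ij}$ and all entries with $i_2,\ldots,i_m$ not all equal equal to $0$. Let $\mathbb{A}_k=(a^{(k)}_{i_1\ldots i_m})$ be the order $m$, dimension $n$ tensor with $a^{(k)}_{ij\ldots j}=\mu_{ij}$; $a^{(k)}_{ii_2\ldots i_m}=1$ whenever $i\in[n]\setminus\{r-q,\ldots,r,r+1\}\pmod n$ and the set of distinct values among $i_2,\ldots,i_m$ equals $\{r-q-1,r\}\pmod n$; and all other entries $0$. Then $S_t(\mathbb{A}_k,n-1)=S_t(\mathbb{A}_0,n-1)$ for every integer $t$ with $1\le t\le k$.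
   Context: For an integer $a$, $|a|_n$ is the least positive integer congruent to $a$ modulo $n$, and $\{a_1,\ldots,a_s\}\pmod n$ means $\{|a_1|_n,\ldots,|a_s|_n\}$. General product of dimension-$n$ tensors: for $\mathbb{A}$ of order $m\ge2$ and $\mathbb{B}$ of order $k\ge1$, $(\mathbb{A}\mathbb{B})_{i\alpha_1\ldots\alpha_{m-1}}=\sum_{i_2,\ldots,i_m=1}^n a_{ii_2\ldots i_m}b_{i_2\alpha_1}\cdots b_{i_m\alpha_{m-1}}$ ($\alpha_l\in[n]^{k-1}$); it is associative and $\mathbb{A}^k$ is the $k$-fold power. $(M(\mathbb{C}))_{ij}=c_{ij\ldots j}$ is the majorization matrix. For $j\in[n]$, $k\ge1$: $S_k(\mathbb{A},j)=\{u\in[n]\mid (M(\mathbb{A}^k))_{uj}>0\}$. *)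

(* Defs.v *)
(* Tensors with nonnegative integer (0/1) entries; all
   indices are 1-based natural numbers, as in the paper ([n] = {1,...,n}). *)
From mathcomp Require Import all_boot all_order all_algebra.
Set Implicit Arguments. Unset Strict Implicit. Unset Printing Implicit Defensive.

(* A dimension-n tensor of arbitrary order p: entry a_{i i_2 ... i_p} is
   [T i [:: i_2; ...; i_p]] (indices 1-based); only lists of length p-1
   are meaningful. *)
Definition tensor := nat -> seq nat -> nat.

Definition modpos (a : int) (n : nat) : nat :=
  let b := absz (a %% n)%Z in if b == 0%N then n else b.

(* General product A B of dimension-n tensors, A of order m, B of order k:
   (A B)_{i alpha_1 ... alpha_{m-1}} =
     sum_{i_2..i_m} a_{i i_2..i_m} b_{i_2 alpha_1} ... b_{i_m alpha_{m-1}},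
   where the index list s is alpha_1 ++ ... ++ alpha_{m-1}, each of length k-1. *)
Definition tprod (n m k : nat) (A B : tensor) : tensor :=
  fun i s => \sum_(f : {ffun 'I_(m.-1) -> 'I_n})
     A i [seq (f l).+1 | l <- enum 'I_(m.-1)] *
     \prod_(l < m.-1) B (f l).+1 (take k.-1 (drop (l * k.-1) s)).

Definition tid : tensor := fun i s => nat_of_bool (s == [:: i]).

(* A^t for A of order m; A^t has order (m-1)^t + 1, A^0 = identity matrix,
   A^(t+1) = A A^t (the product is associative, so this is the k-fold power). *)
Fixpoint tpow (n m : nat) (A : tensor) (t : nat) : tensor :=
  match t with
  | 0 => tid
  | t'.+1 => tprod n m ((m.-1) ^ t').+1 A (tpow n m A t')
  end.

Definition majmx (p : nat) (C : tensor) (i j : nat) : nat := C i (nseq p.-1 j).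

Definition Sset (n m : nat) (A : tensor) (t j : nat) : seq nat :=
  [seq u <- iota 1 n | 0 < majmx ((m.-1) ^ t).+1 (tpow n m A t) u j].

Definition mu1 (n : nat) (i j : nat) : nat :=
  nat_of_bool (((i == 1) && ((j == n.-1) || (j == n))) || ((2 <= i <= n) && (j == i.-1))).

Definition diag_index (s : seq nat) : option nat :=
  if s is j :: _ then (if s == nseq (size s) j then Some j else None) else None.

Definition A0 (n : nat) : tensor :=
  fun i s => if diag_index s is Some j then mu1 n i j else 0.

(* A_k, with parameters q, r (k = (n-1) q + r) *)
Definition Ak (n q r : nat) : tensor :=
  fun i s =>
    if diag_index s is Some j then mu1 n i j else
    let a := modpos (r%:Z - q%:Z - 1) n in
    let b := modpos r%:Z n in
    if ~~ has (fun l => modpos (r%:Z - q%:Z + l%:Z) n == i)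
              (iota 0 (q.+2))
       && [forall v : 'I_n, (v.+1 \in s) == ((v.+1 == a) || (v.+1 == b))]
       && all (fun x => 1 <= x <= n) s
    then 1 else 0.

(* Main.v *)
Require Import Defs.
From mathcomp Require Import all_boot all_order all_algebra.
From mathcomp Require Import zify.


Definition Qf (n m : nat) (A : tensor) (t u j : nat) : bool :=
  0 < majmx ((m.-1) ^ t).+1 (tpow n m A t) u j.

Lemma Qf_step n m A t u j : 1 < m ->
  Qf n m A t.+1 u j =
  [exists f : {ffun 'I_(m.-1) -> 'I_n},
    (0 < A u [seq (f l).+1 | l <- enum 'I_(m.-1)]) &&
    [forall l, Qf n m A t (f l).+1 j]].
Proof.
move=> hm.
rewrite /Qf /majmx /= /tprod /=.
set K := (m.-1) ^ t.
have eK : (m.-1) ^ t.+1 = m.-1 * K by rewrite expnS.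
rewrite eK.
have hsl : forall l : 'I_(m.-1), take K (drop (l * K) (nseq (m.-1 * K) j)) = nseq K j.
  move=> l; rewrite drop_nseq take_nseq //.
  rewrite -mulnBl; apply: leq_pmull; have := ltn_ord l; lia.
under eq_bigr => f _ do under eq_bigr => l _ do rewrite hsl.
apply/idP/idP.
- rewrite lt0n sum_nat_eq0 => /forallPn [f /=].
  rewrite -lt0n muln_gt0 => /andP [hA hP].
  apply/existsP; exists f; rewrite hA /=; apply/forallP => l.
  exact: (gt0_prodn hP).
- case/existsP => f /andP [hA /forallP hP].
  rewrite (bigD1 f) //= addn_gt0 muln_gt0 hA /=.
  by rewrite prodn_gt0.
Qed.

Import Order.TTheory GRing.Theory Num.Theory.
Lemma inr n (hn : 0 < n) : forall z : int, 1 <= modpos z n <= n.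
Proof.
  move=> z; rewrite /modpos; case: ifP => [_|]; first by lia.
  move/negbT; rewrite -lt0n => -> /=.
  have h : ((z %% n)%Z < n%:Z)%R by apply: ltz_pmod; rewrite ltz_nat.
  have h0 : (0 <= (z %% n%:Z)%Z)%R by apply: modz_ge0; rewrite eqz_nat; lia.
  rewrite -lez_nat abszE ger0_norm //.
  by rewrite ltW.
Qed.

Lemma diag_nseq p x : diag_index (nseq p.+1 x) = Some x.
Proof. by rewrite /= size_nseq eqxx. Qed.

Lemma diag_Some s j : diag_index s = Some j -> forall x, x \in s -> x = j.
Proof.
case: s => //= y s'; case: ifP => // /eqP e [<-] x.
case: e => e; rewrite in_cons; case: eqP => // _ /=.
by rewrite e mem_nseq => /andP [_ /eqP].
Qed.

Lemma map_cst (T U : Type) (c : U) (s : seq T) : [seq c | _ <- s] = nseq (size s) c.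
Proof. by elim: s => //= ? ? ->. Qed.

Lemma Qf_intro n m A t u j : 1 < m ->
  (forall p x, A u (nseq p.+1 x) = mu1 n u x) ->
  (exists v : 'I_n, 0 < mu1 n u v.+1 /\ Qf n m A t v.+1 j) -> Qf n m A t.+1 u j.
Proof.
move=> hm hA [v [hmu hQ]]; rewrite Qf_step //; apply/existsP; exists [ffun=> v].
apply/andP; split; last by apply/forallP => l; rewrite ffunE.
have -> : [seq ([ffun=> v] l : 'I_n).+1 | l <- enum 'I_(m.-1)] = nseq (m - 2).+1 v.+1.
  rewrite (eq_map (g := fun _ => v.+1)); last by move=> l; rewrite ffunE.
  rewrite map_cst size_enum_ord; congr nseq; lia.
by rewrite hA.
Qed.

Lemma A0_diag n u p x : A0 n u (nseq p.+1 x) = mu1 n u x.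
Proof. by rewrite /A0 diag_nseq. Qed.

Lemma Ak_diag n q r u p x : Ak n q r u (nseq p.+1 x) = mu1 n u x.
Proof. by rewrite /Ak diag_nseq. Qed.

Lemma Qf_elim0 n m t u j : 1 < m -> Qf n m (A0 n) t.+1 u j ->
  exists v : 'I_n, 0 < mu1 n u v.+1 /\ Qf n m (A0 n) t v.+1 j.
Proof.
move=> hm; rewrite Qf_step // => /existsP [f /andP [hA /forallP hQ]].
have l0lt : 0 < m.-1 by lia.
set l0 := Ordinal l0lt.
exists (f l0); split => //.
move: hA; rewrite /A0; case e: diag_index => [x|] // hmu.
have := @diag_Some _ _ e ((f l0).+1).
by move=> -> //; apply/mapP; exists l0; rewrite ?mem_enum.
Qed.

Lemma Qf_elimk n m q r t u j : 1 < m -> 0 < n -> Qf n m (Ak n q r) t.+1 u j ->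
  (exists v : 'I_n, 0 < mu1 n u v.+1 /\ Qf n m (Ak n q r) t v.+1 j) \/
  (~~ has (fun l => modpos (r%:Z - q%:Z + l%:Z) n == u) (iota 0 (q.+2)) /\
   Qf n m (Ak n q r) t (modpos (r%:Z - q%:Z - 1) n) j /\
   Qf n m (Ak n q r) t (modpos r%:Z n) j).
Proof.
move=> hm hn; rewrite Qf_step // => /existsP [f /andP [hA /forallP hQ]].
move: hA; rewrite /Ak; case e: diag_index => [x|].
  move=> hmu; left.
  have l0lt : 0 < m.-1 by lia.
  set l0 := Ordinal l0lt.
  exists (f l0); split => //.
  have := @diag_Some _ _ e ((f l0).+1).
  by move=> -> //; apply/mapP; exists l0; rewrite ?mem_enum.
case: ifP => // /andP [/andP [hh /forallP hall] _] _; right; split => //.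
have inr := @inr n hn.
set a := modpos (r%:Z - q%:Z - 1) n; set b := modpos r%:Z n.
have memab : forall c, 1 <= c <= n -> (c == a) || (c == b) -> Qf n m (Ak n q r) t c j.
  move=> c hc hab.
  have clt : c.-1 < n by lia.
  have := hall (Ordinal clt); rewrite /= prednK; last by lia.
  rewrite hab => /eqP /mapP [l _ ->]; exact: hQ.
by split; apply: memab; rewrite ?inr ?eqxx ?orbT.
Qed.


Definition Lf n t := 1 + (t + n - 2) %/ (n - 1).
Definition cf n t := t + n - 1.

Lemma Lform n t : 2 < n ->
  let x := t + n - 2 in let J := x %/ (n - 1) in let i := x %% (n - 1) in
  [/\ Lf n t = 1 + J, Lf n t.+1 = 1 + J + (i == n - 2), x = J * (n - 1) + i
    & i < n - 1].
Proof.
move=> hn x J i.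
have hx : x = J * (n - 1) + i by rewrite /J /i -divn_eq.
have hi : i < n - 1 by rewrite /i ltn_pmod //; lia.
split => //.
rewrite /Lf.
have -> : t.+1 + n - 2 = J * (n - 1) + i.+1 by lia.
rewrite divnMDl; last by lia.
case: (ltnP i.+1 (n - 1)) => h.
  rewrite divn_small //. have -> : (i == n - 2) = false by apply/negbTE/eqP; lia. rewrite /= !addn0. done.
have e : i.+1 = n - 1 by lia.
rewrite e divnn. have -> : (i == n - 2) = true by apply/eqP; lia. simpl; lia.
Qed.

Lemma G1 n t : 2 < n -> Lf n t <= Lf n t.+1 <= (Lf n t).+1.
Proof. move=> hn; case: (Lform n t hn) => -> -> _ _; case: (_ == _); lia. Qed.

Lemma G2 n t : 2 < n -> Lf n t.+1 = (Lf n t).+1 -> cf n t + 1 + Lf n t = 1 %[mod n].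
Proof.
move=> hn; case: (Lform n t hn) => -> -> hx hi.
set J := (t + n - 2) %/ (n - 1); set i := (t + n - 2) %% (n - 1).
case: eqP => hi2 h; last by lia.
have -> : cf n t + 1 + (1 + J) = J * n + n + 1 by rewrite /cf; nia.
by rewrite -addnA modnMDl modnDl.
Qed.

Lemma G3 n t : 2 < n -> cf n t + Lf n t = 0 %[mod n] -> Lf n t.+1 = (Lf n t).+1.
Proof.
move=> hn; case: (Lform n t hn) => -> -> hx hi.
set J := (t + n - 2) %/ (n - 1); set i := (t + n - 2) %% (n - 1).
have -> : cf n t + (1 + J) = J * n + (i + 2) by rewrite /cf; nia.
rewrite modnMDl mod0n.
case: (ltnP (i + 2) n) => h.
  by rewrite modn_small //; lia.
have -> : i == n - 2 by apply/eqP; lia.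
move=> _; lia.
Qed.


Definition P n m t u := Qf n m (A0 n) t u (n - 1).
Definition spec n t u := exists2 d, d < Lf n t & u == cf n t + d %[mod n].

Lemma P_step n m t u : 1 < m -> 2 < n -> 1 <= u <= n ->
  P n m t.+1 u = ((1 < u) && P n m t u.-1) || ((u == 1) && (P n m t (n - 1) || P n m t n)).
Proof.
move=> hm hn hu; rewrite /P; apply/idP/idP.
- case/(Qf_elim0 _ _ _ _ _ hm) => v [hmu hP]; move: hmu; rewrite /mu1 lt0b.
  case/orP => /andP [h1 h2].
  + move/eqP: h1 => ->; rewrite /= -subn1 in h2 *.
    by case/orP: h2 => /eqP e; rewrite e in hP; rewrite hP ?orbT.
  + move/eqP: h2 => e; rewrite e in hP; rewrite hP.
    have -> : 1 < u by lia. done.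
- case/orP => /andP [h1 h2].
  + apply: (Qf_intro _ _ _ _ _ _ hm); first by move=> p x; exact: A0_diag.
    have vlt : u.-2 < n by lia.
    exists (Ordinal vlt); rewrite /= /mu1 lt0b.
    have -> : u.-2.+1 = u.-1 by lia.
    rewrite h2; split => //; apply/orP; right; apply/andP; split; first by lia.
    done.
  + apply: (Qf_intro _ _ _ _ _ _ hm); first by move=> p x; exact: A0_diag.
    move/eqP: h1 => ->.
    case/orP: h2 => h2.
    * have vlt : n.-2 < n by lia.
      exists (Ordinal vlt); rewrite /= /mu1 lt0b.
      have -> : n.-2.+1 = n - 1 by lia.
      split; last done. by rewrite subn1 !eqxx.
    * have vlt : n.-1 < n by lia.
      exists (Ordinal vlt); rewrite /= /mu1 lt0b.
      have -> : n.-1.+1 = n by lia.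
      split; last done. by rewrite !eqxx orbT.
Qed.

Lemma mod_inj n u v : 0 < n -> 1 <= u <= n -> 1 <= v <= n -> u == v %[mod n] -> u = v.
Proof.
move=> hn hu hv /eqP.
case: (ltnP u n) => hu'; case: (ltnP v n) => hv'.
- by rewrite !modn_small.
- have -> : v = n by lia. rewrite modnn (modn_small hu') => h; by rewrite h in hu.
- have -> : u = n by lia. rewrite modnn (modn_small hv') => h; lia.
- move=> _; lia.
Qed.
Lemma modS x y n : (x.+1 == y.+1 %[mod n]) = (x == y %[mod n]).
Proof. by rewrite -[x.+1]addn1 -[y.+1]addn1 eqn_modDr. Qed.
Lemma cfS n t : 0 < n -> cf n t.+1 = (cf n t).+1.
Proof. rewrite /cf; lia. Qed.
Lemma L1 n t : 0 < Lf n t.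
Proof. by rewrite /Lf addnC addn1. Qed.

Lemma charP n m : 1 < m -> 2 < n -> forall t u, 1 <= u <= n -> (P n m t u <-> spec n t u).
Proof.
move=> hm hn; elim => [|t IH] u hu.
  rewrite /P /Qf /majmx /tid expn0 /= lt0b /spec.
  have -> : Lf n 0 = 1 by rewrite /Lf divn_small //; lia.
  split.
    move/eqP => [<-]; exists 0 => //; by rewrite /cf addn0 add0n.
  move=> [d hd]; have -> : d = 0 by lia.
  rewrite /cf addn0 add0n => /(mod_inj _ _ _ (ltnW (ltnW hn)) hu) -> //; lia.
have hn0 : 0 < n by lia.
rewrite (P_step _ _ _ _ hm hn hu).
case: (ltnP 1 u) => hu1.
  have -> : (u == 1) = false by apply/negbTE/eqP; lia.
  rewrite andTb andFb orbF (IH u.-1); last by lia.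
  have eu : u = (u.-1).+1 by lia.
  have hG := G1 n t hn.
  split.
    move=> [d hd he]; exists d; first by lia.
    by rewrite cfS // addSn eu modS.
  move=> [d hd]; rewrite cfS // addSn {1}eu modS.
  case: (ltnP d (Lf n t)) => hdl he; first by exists d.
  have hLS : Lf n t.+1 = (Lf n t).+1 by lia.
  have ed : d = Lf n t by lia.
  have h1 := G2 n t hn hLS.
  have h2 : u == cf n t + 1 + Lf n t %[mod n] by rewrite addn1 addSn -ed eu modS.
  have : u = 1.
    apply: (mod_inj n u 1 hn0 hu); first by lia.
    by rewrite (eqP h2) h1.
  lia.
have -> : u = 1 by lia.
rewrite andFb orFb eqxx andTb.
have IHa : P n m t (n - 1) <-> spec n t (n - 1) by apply: IH; lia.
have IHb : P n m t n <-> spec n t n by apply: IH; lia.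
have hG := G1 n t hn.
have en : n = (n - 1).+1 by lia.
split.
  case/orP.
    move/IHa => [d hd he].
    have h : (cf n t + d).+1 == (n - 1).+1 %[mod n] by rewrite modS eq_sym.
    rewrite -en in h.
    case: (ltnP d.+1 (Lf n t.+1)) => hdl.
      exists d.+1 => //.
      by rewrite cfS // addSn modS addnS (eqP h) modnn mod0n.
    have e1 : Lf n t = d.+1 by lia.
    have e2 : Lf n t.+1 = d.+1 by lia.
    have : cf n t + Lf n t = 0 %[mod n].
      by rewrite e1 addnS (eqP h) modnn mod0n.
    move/(G3 n t hn); lia.
  move/IHb => [d hd he]; exists d; first by lia.
  by rewrite cfS // addSn modS mod0n; rewrite modnn in he.
move=> [d hd]; rewrite cfS // addSn modS mod0n.
case: (ltnP d (Lf n t)) => hdl he.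
  by apply/orP; right; apply/IHb; exists d => //; rewrite modnn.
have ed : d = Lf n t by lia.
have hL := L1 n t.
apply/orP; left; apply/IHa; exists d.-1; first by lia.
have h3 : (n - 1).+1 == (cf n t + d.-1).+1 %[mod n].
  by rewrite -en -addnS prednK; [rewrite modnn | lia].
by rewrite modS in h3.
Qed.


Lemma two n x y : 0 < n -> y < n -> x < n + n -> x = y %[mod n] -> x = y \/ x = y + n.
Proof.
move=> hn hy hx.
case: (ltnP x n) => h.
  by rewrite !modn_small // => ->; left.
have ex : x = (x - n) + n by lia.
rewrite ex modnDr !modn_small //; last by lia.
move=> e; right; lia.
Qed.

Lemma F1 n q r t : 2 < n -> 1 <= r <= n - 1 -> t <= (n - 1) * q + r -> Lf n t <= q + 2.
Proof.
move=> hn hr ht; rewrite /Lf.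
have h : (t + n - 2) %/ (n - 1) <= ((n - 1) * q + r + n - 2) %/ (n - 1).
  by apply: leq_div2r; lia.
have e : (n - 1) * q + r + n - 2 = (q + 1) * (n - 1) + (r - 1).
  have : forall N, N + 1 = n -> N * q + r + n - 2 = (q + 1) * N + (r - 1).
    move=> N hN; rewrite [N * q]mulnC mulnDl mul1n; lia.
  apply; lia.
rewrite e divnMDl in h; last by lia.
rewrite (@divn_small (r - 1) (n - 1)) in h; last by lia.
lia.
Qed.

Lemma F2 n q r t : 2 < n -> q <= n - 3 -> 1 <= r <= n - 1 -> t < (n - 1) * q + r ->
  Lf n t = q + 2 -> cf n t = r + n - q - 1 %[mod n] -> False.
Proof.
move=> hn hq hr ht hL hc.
have hd : (t + n - 2) %/ (n - 1) = q + 1.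
  move: hL; rewrite /Lf; move: (_ %/ _) => D; lia.
have h1 := leq_trunc_div (t + n - 2) (n - 1).
rewrite hd in h1.
have [N eN] : exists N, n = N.+1 by exists n.-1; lia.
subst n.
have e1 : N.+1 - 1 = N by lia.
rewrite e1 in h1 ht.
rewrite mulnDl mul1n [q * N]mulnC in h1.
have ht1 : N * q + 1 <= t by lia.
set i := t - N * q.
have hi : 1 <= i < r by rewrite /i; lia.
have : cf N.+1 t + q = r + N.+1 - q - 1 + q %[mod N.+1] by rewrite -modnDml hc modnDml.
have -> : cf N.+1 t + q = (q + 1) * N.+1 + (i - 1).
  clear hc; rewrite /cf /i mulnDl mul1n mulnS [q * N]mulnC; lia.
have -> : r + N.+1 - q - 1 + q = N.+1 + (r - 1) by clear hc; lia.
clear hc; rewrite modnMDl modnDl !modn_small; [lia|lia|lia].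
Qed.


Lemma KEY n q r t a b u : 2 < n -> q <= n - 3 -> 1 <= r <= n - 1 -> t < (n - 1) * q + r ->
  a = r + n - q - 1 %[mod n] -> b = r %[mod n] -> spec n t a -> spec n t b ->
  (forall l, l <= q.+1 -> u %% n <> (r + n - q + l) %% n) -> spec n t.+1 u.
Proof.
move=> hn hq hr ht ha hb [da hda ea] [db hdb eb] hex.
have hn0 : 0 < n by clear -hn; lia.
have hF1 := F1 n q r t hn hr (ltnW ht).
have hL1 := G1 n t hn.
have [c ec] : exists c, c = cf n t by eexists.
have hc := cfS n t hn0; rewrite -ec in ea eb hc.
move/eqP: ea => ea; move/eqP: eb => eb.
have e1 : (c + (da + q.+1)) %% n = (c + db) %% n.
  rewrite addnA -modnDml -ea ha modnDml.
  have -> : r + n - q - 1 + q.+1 = r + n by clear -hq hr hn; lia.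
  by rewrite modnDr -hb eb.
have e2 : (da + q.+1) %% n = db %% n by move/eqP: e1; rewrite eqn_modDl => /eqP.
have hdbn : db < n by clear -hdb hF1 hq hn; lia.
have hx : da + q.+1 < n + n by clear -hda hF1 hq hn; lia.
case: (two n _ _ hn0 hdbn hx e2) => e3.
  exfalso; apply: (F2 n q r t hn hq hr ht).
    by clear -e3 hdb hF1 hda; lia.
  have e0 : da = 0 by clear -e3 hdb hF1; lia.
  by rewrite e0 addn0 in ea; rewrite -ec -ea ha.
set S := c + 1 + db.
set e := (u + (n - 1) * S) %% n.
have hS : (S + e) %% n = u %% n.
  rewrite modnDmr.
  have hSn : S <= n * S by apply: leq_pmull.
  have -> : S + (u + (n - 1) * S) = S * n + u.
    rewrite mulnBl mul1n [S * n]mulnC; clear -hSn; lia.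
  by rewrite modnMDl.
have hel : e < n by apply: ltn_pmod.
case: (leqP (e + q + 2) n) => hle.
  exists (db + e).
    by clear -e3 hle hda hL1; lia.
  apply/eqP; rewrite hc.
  have -> : (c.+1 + (db + e)) = S + e by rewrite /S; clear; lia.
  by rewrite hS.
exfalso; apply: (hex (e - (n - q - 1))).
  by clear -hel hq hn; lia.
rewrite -hS.
have -> : S + e = (c + db) + e.+1 by rewrite /S; clear; lia.
rewrite -modnDml -eb hb modnDml.
congr (_ %% n).
by clear -hle hq hn hr; lia.
Qed.


Lemma modpos_nat n w : modpos w%:Z n = if w %% n == 0 then n else w %% n.
Proof. by rewrite /modpos modz_nat absz_nat. Qed.

Lemma modpos_shift n w : modpos (w%:Z - n%:Z) n = modpos w%:Z n.
Proof.
rewrite /modpos; have := modzDr (w%:Z - n%:Z) n%:Z.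
by rewrite subrK => ->.
Qed.

Lemma modpos_mod n w : 0 < n -> modpos w%:Z n %% n = w %% n.
Proof.
move=> hn; rewrite modpos_nat; case: eqP => [->|_]; first by rewrite modnn.
by rewrite modn_mod.
Qed.

Lemma modpos_eq n w u : 0 < n -> 1 <= u <= n -> (modpos w%:Z n == u) = (u %% n == w %% n).
Proof.
move=> hn hu; apply/eqP/eqP.
  by move=> <-; rewrite modpos_mod.
move=> h; apply: (mod_inj n); [done | exact: inr | done | by rewrite modpos_mod // h].
Qed.

Lemma main n m q r k : 1 < m -> 2 < n -> q <= n - 3 -> 1 <= r <= n - 1 ->
  k = (n - 1) * q + r -> forall t, t <= k -> forall u, 1 <= u <= n ->
  Qf n m (Ak n q r) t u (n - 1) = P n m t u.
Proof.
move=> hm hn hq hr hk; elim => [|t IH] htk u hu; first by [].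
have hn0 : 0 < n by lia.
have IH' : forall v, 1 <= v <= n -> Qf n m (Ak n q r) t v (n - 1) = P n m t v.
  by move=> v hv; apply: IH => //; lia.
apply/idP/idP.
- case/(Qf_elimk _ _ _ _ _ _ _ hm hn0) => [[v [hmu hQ]] | [hexcl [hQa hQb]]].
    apply: (Qf_intro _ _ _ _ _ _ hm); first by move=> p x; exact: A0_diag.
    exists v; split => //; rewrite -/(P n m t v.+1) -IH' //; have := ltn_ord v; lia.
  set a := modpos _ n in hQa; set b := modpos _ n in hQb.
  have ha1 := inr n hn0 (r%:Z - q%:Z - 1).
  have hb1 := inr n hn0 r%:Z.
  rewrite IH' // in hQa; rewrite IH' // in hQb.
  move/(charP n m hm hn t a ha1): hQa => hSa.
  move/(charP n m hm hn t b hb1): hQb => hSb.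
  apply/(charP n m hm hn t.+1 u hu).
  apply: (KEY n q r t a b u hn hq hr _ _ _ hSa hSb).
  + lia.
  + rewrite /a.
    have -> : (r%:Z - q%:Z - 1 = (r + n - q - 1)%:Z - n%:Z)%R by lia.
    by rewrite modpos_shift modpos_mod.
  + by rewrite /b modpos_mod.
  + move=> l hl; apply/eqP; rewrite -modpos_eq //.
    move/hasPn: hexcl => /(_ l); rewrite mem_iota add0n.
    have -> : (r%:Z - q%:Z + l%:Z = (r + n - q + l)%:Z - n%:Z)%R by lia.
    rewrite modpos_shift => h; apply: h; lia.
- rewrite /P => /(Qf_elim0 _ _ _ _ _ hm) [v [hmu hQ]].
  apply: (Qf_intro _ _ _ _ _ _ hm); first by move=> p x; exact: Ak_diag.
  exists v; split => //; rewrite IH' //; have := ltn_ord v; lia.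
Qed.

Theorem proposition3p1 (m n k q r : nat) :
  2 <= m ->
  1 <= k -> k <= n ^ 2 + 2 - 3 * n ->
  k = (n - 1) * q + r -> 1 <= r <= n - 1 ->
  forall t : nat, 1 <= t <= k ->
    Sset n m (Ak n q r) t (n - 1) = Sset n m (A0 n) t (n - 1).
Proof.
move=> hm hk1 hk2 hk hr t ht.
have hn : 2 < n.
  move: hk2 hr; case: n hk => [|[|[|n']]] //= hk; try lia.
have hq : q <= n - 3.
  case: (leqP q (n - 3)) => // hq; exfalso.
  have [p ep] : exists p, n = p.+3 by exists (n - 3); lia.
  subst n.
  have e1 : p.+3 ^ 2 + 2 - 3 * p.+3 = (p + 2) * (p + 1) by rewrite expnS expn1; nia.
  have e2 : p.+3 - 1 = p + 2 by lia.
  rewrite e1 in hk2; rewrite e2 in hk.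
  have : (p + 2) * (p + 1) <= (p + 2) * q by apply: leq_mul => //; lia.
  lia.
apply: eq_in_filter => u; rewrite mem_iota => hu.
apply: (main n m q r k) => //; lia.
Qed.
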